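(* Let $n\ge 2$. For $p\in(0,1)$ let $\mathfrak p$ be the geometric distribution $p_i=(1-p)p^{i-1}$, $i\in\mathbb N$, and let $d(p)$ be the Hausdorff dimension of $\Pi_{\mathfrak p}(n)=\pi_{\mathfrak p}(\{1,\dots,n\}^{\mathbb N})$. Then $d(p)$ is the unique solution $d$ of $(1-p^{dn})(1-p)^d/(1-p^d)=1$, and as $p$ ranges over $(0,1)$, $d(p)$ attains every value in $(0,1)$.
   Context: $\mathbb N=\{1,2,3,\dots\}$. For a probability distribution $\mathfrak p=(p_i)$ with all $p_i\in(0,1)$ and $\sum_i p_i=1$, set $\widehat{p_1}=0$, $\widehat{p_k}=\sum_{i=1}^{k-1}p_i$ for $k\ge2$, $T_k x=p_kx+\widehat{p_k}$, and $\pi_{\mathfrak p}((n_j))=\lim_{j\to\infty}T_{n_1}\circ\cdots\circ T_{n_j}(0)=\widehat{p_{n_1}}+\sum_{j=1}^\infty p_{n_1}\cdots p_{n_j}\widehat{p_{n_{j+1}}}$, a map $\mathbb N^{\mathbb N}\to[0,1)$. *)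

(* Defs.v *)
From Stdlib Require Import Reals.
Open Scope R_scope.

(* A probability vector is a map pp : nat -> R, with pp i = p_i for i >= 1
   (the value at 0 is irrelevant). *)

(* phat pp k = sum_{i=1}^{k-1} pp i   (so phat pp 1 = 0; phat pp 0 := 0). *)
Fixpoint phat (pp : nat -> R) (k : nat) : R :=
  match k with
  | O => 0
  | S k' => match k' with
            | O => 0
            | _ => phat pp k' + pp k'
            end
  end.

Definition Tmap (pp : nat -> R) (k : nat) (x : R) : R := pp k * x + phat pp k.

(* Tcomp pp w m x = T_{w 0} o T_{w 1} o ... o T_{w m} (x).
   The word (n_1, n_2, ...) of the paper is w 0, w 1, ... *)
Fixpoint Tcomp (pp : nat -> R) (w : nat -> nat) (m : nat) (x : R) : R :=
  match m with
  | O => Tmap pp (w O) x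
  | S m' => Tcomp pp w m' (Tmap pp (w (S m')) x)
  end.

Definition pi_p (pp : nat -> R) (w : nat -> nat) (x : R) : Prop :=
  Un_cv (fun m => Tcomp pp w m 0) x.

Definition Pi_set (pp : nat -> R) (n : nat) (x : R) : Prop :=
  exists w : nat -> nat, (forall j, (1 <= w j <= n)%nat) /\ pi_p pp w x.

Definition geom (p : R) (i : nat) : R := (1 - p) * p ^ (i - 1).

(* r^s with the convention 0^s = 0 (only used for s > 0). *)
Definition pw (r s : R) : R := if Rle_dec r 0 then 0 else Rpower r s.

Definition diam_cover (E : R -> Prop) (U : nat -> R -> Prop) (r : nat -> R) : Prop :=
  (forall x, E x -> exists i, U i x) /\
  (forall i x y, U i x -> U i y -> Rabs (x - y) <= r i).

Definition Hnull (E : R -> Prop) (s : R) : Prop :=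
  forall delta eps, 0 < delta -> 0 < eps ->
    exists (U : nat -> R -> Prop) (r : nat -> R),
      diam_cover E U r /\ (forall i, 0 <= r i <= delta) /\
      (forall m, sum_f_R0 (fun i => pw (r i) s) m <= eps).

Definition hausdorff_dim (E : R -> Prop) (d : R) : Prop :=
  (forall s, 0 < s -> Hnull E s -> d <= s) /\
  (forall d', (forall s, 0 < s -> Hnull E s -> d' <= s) -> d' <= d).

Definition dim_eq (p : R) (n : nat) (d : R) : Prop :=
  (1 - Rpower p (d * INR n)) * Rpower (1 - p) d / (1 - Rpower p d) = 1.

(* Main.v *)
Require Import Defs.
From Stdlib Require Import Reals Lra Lia List Classical ClassicalEpsilon Ranalysis5.
Import ListNotations.
Open Scope R_scope.

Definition lsum (l : list nat) (f : nat -> R) : R :=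
  fold_right (fun j acc => f j + acc) 0 l.

Lemma lsum_app l1 l2 f : lsum (l1 ++ l2) f = lsum l1 f + lsum l2 f.
Proof. induction l1; simpl; [ring| rewrite IHl1; ring]. Qed.

Lemma lsum_seqS m f : lsum (seq 1 (S m)) f = lsum (seq 1 m) f + f (S m).
Proof. rewrite seq_S, lsum_app. simpl. ring. Qed.

Lemma lsum_ext l f g : (forall j, In j l -> f j = g j) -> lsum l f = lsum l g.
Proof. induction l; simpl; intros H; auto. rewrite H, IHl; auto. Qed.

Lemma lsum_le l f g : (forall j, In j l -> f j <= g j) -> lsum l f <= lsum l g.
Proof. induction l; simpl; intros H; [lra|]. pose proof (H a (or_introl eq_refl)).
 pose proof (IHl (fun j h => H j (or_intror h))). lra. Qed.

Lemma lsum_zero l f : (forall j, In j l -> f j = 0) -> lsum l f = 0.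
Proof. induction l; simpl; intros H; auto. rewrite H, IHl; auto; ring. Qed.

Lemma lsum_nonneg l f : (forall j, In j l -> 0 <= f j) -> 0 <= lsum l f.
Proof. intros H. apply Rle_trans with (lsum l (fun _ => 0)).
 rewrite lsum_zero; auto; lra. apply lsum_le; auto. Qed.

Lemma lsum_scal l f c : lsum l (fun j => c * f j) = c * lsum l f.
Proof. induction l; simpl; [ring| rewrite IHl; ring]. Qed.

Lemma lsum_plus l f g : lsum l (fun j => f j + g j) = lsum l f + lsum l g.
Proof. induction l; simpl; [ring| rewrite IHl; ring]. Qed.


Lemma lsum_single l f h : NoDup l -> (forall j, In j l -> 0 <= f j) ->
  (forall j j', In j l -> In j' l -> 0 < f j -> 0 < f j' -> j = j') ->
  (forall j, In j l -> f j <= h) -> 0 <= h -> lsum l f <= h.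
Proof.
 induction l as [|a l IH]; simpl; intros Hnd Hnn Hu Hb Hh; [lra|].
 inversion Hnd; subst.
 destruct (Rle_lt_or_eq_dec 0 (f a) (Hnn a (or_introl eq_refl))) as [Hp|Hz].
 - rewrite lsum_zero. pose proof (Hb a (or_introl eq_refl)); lra.
   intros j Hj. destruct (Rle_lt_or_eq_dec 0 (f j) (Hnn j (or_intror Hj))) as [Hq|Hq]; auto.
   assert (a = j) by (apply Hu; auto). subst; contradiction.
 - rewrite <- Hz. rewrite Rplus_0_l. apply IH; auto.
Qed.

Lemma sum_f_R0_lsum l (f : nat -> nat -> R) N :
  sum_f_R0 (fun i => lsum l (f i)) N = lsum l (fun j => sum_f_R0 (fun i => f i j) N).
Proof.
 induction N; simpl. auto.
 rewrite IHN. rewrite <- lsum_plus. auto.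
Qed.

Lemma pow_le_one p k : 0 <= p <= 1 -> p ^ k <= 1.
Proof. intros H. induction k; simpl. lra. assert (0 <= p ^ k) by (apply pow_le; lra). nra. Qed.

Lemma pow_le_dec (p : R) a b : 0 < p <= 1 -> (a <= b)%nat -> p ^ b <= p ^ a.
Proof. intros Hp Hab. replace b with (a + (b - a))%nat by lia. rewrite pow_add.
 assert (0 < p ^ a) by (apply pow_lt; lra).
 assert (p ^ (b - a) <= 1) by (apply pow_le_one; lra). 
 assert (0 <= p ^ (b-a)) by (apply pow_le; lra). nra. Qed.

Lemma phat_geom p k : phat (geom p) (S k) = 1 - p ^ k.
Proof. induction k. simpl. ring.
 change (phat (geom p) (S (S k))) with (phat (geom p) (S k) + geom p (S k)).
 rewrite IHk. unfold geom. replace (S k - 1)%nat with k by lia. simpl. ring. Qed.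

Lemma geom_S p k : geom p (S k) = (1 - p) * p ^ k.
Proof. unfold geom. f_equal. f_equal. lia. Qed.

Lemma geom_pos p j : 0 < p < 1 -> 0 < geom p j.
Proof. intros. unfold geom. apply Rmult_lt_0_compat. lra. apply pow_lt; lra. Qed.

Lemma geom_le p j : 0 < p < 1 -> geom p j <= 1 - p.
Proof. intros. unfold geom. assert (p ^ (j-1) <= 1) by (apply pow_le_one; lra).
 assert (0 <= p ^ (j-1)) by (apply pow_le; lra). nra. Qed.

Lemma Tmap_S p k y : Tmap (geom p) (S k) y = (1 - p) * p ^ k * y + (1 - p ^ k).
Proof. unfold Tmap. rewrite phat_geom, geom_S. ring. Qed.

Lemma Tmap_range p n j y : 0 < p < 1 -> (1 <= j <= n)%nat -> 0 <= y <= 1 ->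
  1 - p ^ (j - 1) <= Tmap (geom p) j y <= 1 - p ^ j /\ 0 <= 1 - p ^ (j-1) /\ 1 - p ^ j <= 1 - p ^ n.
Proof. intros Hp Hj Hy. destruct j as [|k]. lia. rewrite Tmap_S.
 replace (S k - 1)%nat with k by lia.
 assert (0 < p ^ k) by (apply pow_lt; lra).
 assert (p ^ k <= 1) by (apply pow_le_one; lra).
 assert (p ^ n <= p ^ S k) by (apply pow_le_dec; [lra|lia]).
 simpl pow in *. assert (0 <= (1-p) * p ^ k * y) by (apply Rmult_le_pos; [apply Rmult_le_pos|]; lra).
 assert ((1-p) * p ^ k * y <= (1-p) * p ^ k) by (rewrite <- (Rmult_1_r ((1-p) * p ^ k)) at 2; apply Rmult_le_compat_l; [apply Rmult_le_pos|]; lra).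
 repeat split; lra.
Qed.

Definition Tl p (u : list nat) (x : R) : R := fold_right (fun j y => Tmap (geom p) j y) x u.
Definition len p (u : list nat) : R := fold_right (fun j acc => geom p j * acc) 1 u.

Lemma Tl_app p u v x : Tl p (u ++ v) x = Tl p u (Tl p v x).
Proof. unfold Tl. apply fold_right_app. Qed.

Lemma Tl_affine p u y : Tl p u y = Tl p u 0 + len p u * y.
Proof. induction u; simpl. ring. unfold Tmap. fold (Tl p u y). fold (Tl p u 0).
 rewrite IHu. ring. Qed.

Lemma len_app p u v : len p (u ++ v) = len p u * len p v.
Proof. induction u; simpl. ring. rewrite IHu. ring. Qed.

Lemma len_pos p u : 0 < p < 1 -> 0 < len p u.
Proof. intros. induction u; simpl. lra. apply Rmult_lt_0_compat; auto. apply geom_pos; auto. Qed.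

Lemma len_le p u : 0 < p < 1 -> len p u <= (1 - p) ^ length u.
Proof. intros. induction u; simpl. lra. apply Rmult_le_compat; auto.
 left; apply geom_pos; auto. left; apply len_pos; auto. apply geom_le; auto. Qed.

Definition valid n (u : list nat) := Forall (fun j => (1 <= j <= n)%nat) u.

Lemma Tl_range p n u y : 0 < p < 1 -> valid n u -> 0 <= y <= 1 -> 0 <= Tl p u y <= 1.
Proof. intros Hp Hv Hy. induction Hv; simpl. auto.
 fold (Tl p l y). pose proof (Tmap_range p n x (Tl p l y) Hp H IHHv).
 assert (p ^ n <= 1) by (apply pow_le_one; lra). assert (0 < p ^ n) by (apply pow_lt; lra). lra. Qed.

Fixpoint pref (w : nat -> nat) (k : nat) : list nat :=
  match k with O => [] | S k => pref w k ++ [w k] end.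

Lemma pref_length w k : length (pref w k) = k.
Proof. induction k; simpl; auto. rewrite length_app, IHk; simpl; lia. Qed.

Lemma Tcomp_pref p w m x : Tcomp (geom p) w m x = Tl p (pref w (S m)) x.
Proof. revert x; induction m; intros x. reflexivity.
 simpl Tcomp. rewrite IHm. change (pref w (S (S m))) with (pref w (S m) ++ [w (S m)]).
 rewrite Tl_app. reflexivity. Qed.

Lemma pref_valid n w k : (forall j, (1 <= w j <= n)%nat) -> valid n (pref w k).
Proof. intros Hw. induction k; simpl. constructor. apply Forall_app; split; auto. Qed.

Lemma pref_ext p n w k j : 0 < p < 1 -> (forall i, (1 <= w i <= n)%nat) -> forall x, 0 <= x <= 1 ->
  exists y, 0 <= y <= 1 /\ Tl p (pref w (k + j)) x = Tl p (pref w k) y.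
Proof. intros Hp Hw. induction j; intros x Hx.
 - exists x. rewrite Nat.add_0_r. auto.
 - replace (k + S j)%nat with (S (k + j)) by lia. simpl pref. rewrite Tl_app.
   apply IHj. simpl. apply (Tl_range p n [w (k+j)%nat]); auto. repeat constructor; apply Hw.
Qed.

Definition incyl p u x := Tl p u 0 <= x <= Tl p u 0 + len p u.

Lemma Tcomp_incyl p n w k m : 0 < p < 1 -> (forall i, (1 <= w i <= n)%nat) -> (k <= S m)%nat ->
  incyl p (pref w k) (Tcomp (geom p) w m 0).
Proof. intros Hp Hw Hk. rewrite Tcomp_pref. replace (S m) with (k + (S m - k))%nat by lia.
 destruct (pref_ext p n w k (S m - k) Hp Hw 0) as [y [Hy E]]. lra. rewrite E.
 unfold incyl. rewrite (Tl_affine p _ y). pose proof (len_pos p (pref w k) Hp). nra. Qed.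

Lemma cv_closed u x A B : Un_cv u x -> (exists N, forall m, (m >= N)%nat -> A <= u m <= B) -> A <= x <= B.
Proof. intros Hc [N HN]. split.
 - destruct (Rle_or_lt A x) as [h|h]; auto. destruct (Hc (A - x)) as [N1 HN1]. lra.
   specialize (HN1 (max N N1) ltac:(lia)). specialize (HN (max N N1) ltac:(lia)).
   unfold R_dist in HN1. apply Rabs_def2 in HN1. lra.
 - destruct (Rle_or_lt x B) as [h|h]; auto. destruct (Hc (x - B)) as [N1 HN1]. lra.
   specialize (HN1 (max N N1) ltac:(lia)). specialize (HN (max N N1) ltac:(lia)).
   unfold R_dist in HN1. apply Rabs_def2 in HN1. lra.
Qed.

Lemma lim_incyl p n w x k : 0 < p < 1 -> (forall i, (1 <= w i <= n)%nat) ->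
  Un_cv (fun m => Tcomp (geom p) w m 0) x -> incyl p (pref w k) x.
Proof. intros Hp Hw Hc. apply (cv_closed _ _ _ _ Hc). exists k. intros m Hm.
 apply (Tcomp_incyl p n); auto. Qed.

Lemma small_pow a e : 0 <= a < 1 -> 0 < e -> exists N, forall m, (m >= N)%nat -> a ^ m < e.
Proof. intros Ha He. destruct (pow_lt_1_zero a ltac:(rewrite Rabs_right; lra) e He) as [N HN].
 exists N. intros m Hm. specialize (HN m Hm). rewrite Rabs_right in HN; auto. apply Rle_ge, pow_le; lra. Qed.

Lemma lim_exists p n w : 0 < p < 1 -> (forall i, (1 <= w i <= n)%nat) ->
  exists x, Un_cv (fun m => Tcomp (geom p) w m 0) x.
Proof. intros Hp Hw.
 assert (Hcc : Cauchy_crit (fun m => Tcomp (geom p) w m 0)).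
 { intros e He. destruct (small_pow (1-p) e ltac:(lra) He) as [N HN]. exists N.
   intros a b Ha Hb. pose proof (Tcomp_incyl p n w N a Hp Hw ltac:(lia)).
   pose proof (Tcomp_incyl p n w N b Hp Hw ltac:(lia)). unfold incyl in *.
   pose proof (len_le p (pref w N) Hp). rewrite pref_length in H1. specialize (HN N (le_n _)).
   unfold R_dist. apply Rabs_def1; lra. }
 destruct (R_complete _ Hcc) as [x Hx]. exists x; auto. Qed.

Fixpoint words n m : list (list nat) :=
  match m with O => [[]] | S m => flat_map (fun j => map (cons j) (words n m)) (seq 1 n) end.

Lemma In_words n u : valid n u -> In u (words n (length u)).
Proof. induction 1; simpl. auto. apply in_flat_map. exists x. split.
 apply in_seq; lia. apply in_map; auto. Qed.

Lemma words_valid n m u : In u (words n m) -> valid n u /\ length u = m.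
Proof. revert u; induction m; simpl; intros u H.
 - destruct H as [<-|[]]. split; [constructor|auto].
 - apply in_flat_map in H. destruct H as [j [Hj Hu]]. apply in_map_iff in Hu.
   destruct Hu as [v [<- Hv]]. apply in_seq in Hj. destruct (IHm v Hv).
   split. constructor; auto; lia. simpl; lia. Qed.

Definition wsum (W : list (list nat)) (f : list nat -> R) := fold_right (fun u acc => f u + acc) 0 W.

Lemma wsum_app W1 W2 f : wsum (W1 ++ W2) f = wsum W1 f + wsum W2 f.
Proof. induction W1; simpl; [ring| rewrite IHW1; ring]. Qed.

Lemma wsum_flat l g f : wsum (flat_map g l) f = lsum l (fun j => wsum (g j) f).
Proof. induction l; simpl. auto. rewrite wsum_app, IHl. auto. Qed.

Lemma wsum_map_cons j W f : wsum (map (cons j) W) f = wsum W (fun u => f (j :: u)).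
Proof. induction W; simpl; auto. rewrite IHW; auto. Qed.

Lemma wsum_scal W f c : wsum W (fun u => c * f u) = c * wsum W f.
Proof. induction W; simpl; [ring| rewrite IHW; ring]. Qed.

Definition pw_pos x s : 0 < x -> pw x s = Rpower x s.
Proof. intros. unfold pw. destruct (Rle_dec x 0); auto. lra. Qed.

Definition Fs p n s := lsum (seq 1 n) (fun j => Rpower (geom p j) s).

Lemma wsum_ext W f g : (forall u, In u W -> f u = g u) -> wsum W f = wsum W g.
Proof. induction W; simpl; intros H; auto. rewrite H, IHW; auto. Qed.

Lemma Rpower_1_l s : Rpower 1 s = 1.
Proof. unfold Rpower. rewrite ln_1, Rmult_0_r. apply exp_0. Qed.

Lemma wsum_words p n s m : 0 < p < 1 ->
  wsum (words n m) (fun u => pw (len p u) s) = (Fs p n s) ^ m.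
Proof. intros Hp. induction m; simpl. rewrite pw_pos by lra. rewrite Rpower_1_l. ring.
 rewrite wsum_flat. unfold Fs. rewrite Rmult_comm, <- lsum_scal. apply lsum_ext. intros j _.
 rewrite wsum_map_cons. fold (Fs p n s). rewrite <- IHm, Rmult_comm, <- wsum_scal. apply wsum_ext. intros u _.
 simpl. pose proof (len_pos p u Hp). pose proof (geom_pos p j Hp).
 rewrite !pw_pos; auto. rewrite Rpower_mult_distr; auto. apply Rmult_lt_0_compat; auto. Qed.

Lemma pw_nonneg x s : 0 <= pw x s.
Proof. unfold pw. destruct (Rle_dec x 0). lra. unfold Rpower. left; apply exp_pos. Qed.

Lemma fold_nonneg vs : (forall i, 0 <= nth i vs 0) -> 0 <= fold_right Rplus 0 vs.
Proof. induction vs; simpl; intros H. lra. pose proof (H O). simpl in H0.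
 pose proof (IHvs (fun i => H (S i))). lra. Qed.

Lemma sum_nth_le vs M : (forall i, 0 <= nth i vs 0) ->
  sum_f_R0 (fun i => nth i vs 0) M <= fold_right Rplus 0 vs.
Proof. revert M; induction vs; intros M H.
 - simpl. rewrite (sum_eq_R0 _ M); [lra|]. intros i _. destruct i; reflexivity.
 - assert (Hs : 0 <= fold_right Rplus 0 vs).
   { apply fold_nonneg. intros i; apply (H (S i)). }
   destruct M. simpl. lra.
   rewrite decomp_sum by lia. simpl. simpl pred. specialize (IHvs M (fun i => H (S i))). simpl in IHvs. lra.
Qed.

Lemma pw_nth p W s i : pw (nth i (map (len p) W) 0) s = nth i (map (fun u => pw (len p u) s) W) 0.
Proof. revert i; induction W; intros i; destruct i; simpl; auto; unfold pw; destruct (Rle_dec 0 0); lra. Qed.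

Lemma fold_map_wsum W g : fold_right Rplus 0 (map g W) = wsum W g.
Proof. induction W; simpl; auto. rewrite IHW; auto. Qed.

Lemma Fs_pos p n s : 0 < p < 1 -> 0 <= Fs p n s.
Proof. intros. apply lsum_nonneg. intros. unfold Rpower. left; apply exp_pos. Qed.

Lemma Pi_incyl p n x k : 0 < p < 1 -> Pi_set (geom p) n x ->
  exists u, valid n u /\ length u = k /\ incyl p u x.
Proof. intros Hp [w [Hw Hc]]. exists (pref w k). split. apply pref_valid; auto.
 split. apply pref_length. apply (lim_incyl p n); auto. Qed.

Lemma upper_bound p n s : 0 < p < 1 -> 0 < s -> Fs p n s < 1 -> Hnull (Pi_set (geom p) n) s.
Proof. intros Hp Hs HF delta eps Hd He.
 pose proof (Fs_pos p n s Hp).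
 destruct (small_pow _ _ (conj H HF) He) as [N1 HN1].
 destruct (small_pow (1-p) delta ltac:(lra) Hd) as [N2 HN2].
 set (m := max N1 N2). set (W := words n m).
 exists (fun i x => incyl p (nth i W []) x /\ (i < length W)%nat).
 exists (fun i => nth i (map (len p) W) 0).
 split; [split|split].
 - intros x Hx. destruct (Pi_incyl p n x m Hp Hx) as [u [Hv [Hl Hu]]].
   pose proof (In_words n u Hv). rewrite Hl in H0. destruct (In_nth W u [] H0) as [i [Hi Hni]].
   exists i. rewrite Hni. auto.
 - intros i x y [Hx Hi] [Hy _]. rewrite (nth_indep _ 0 (len p [])) by (rewrite length_map; auto).
   rewrite map_nth. unfold incyl in *. apply Rabs_le. lra.
 - intros i. destruct (Nat.lt_ge_cases i (length W)) as [Hi|Hi].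
   + rewrite (nth_indep _ 0 (len p [])) by (rewrite length_map; auto). rewrite map_nth.
     pose proof (nth_In W [] Hi). destruct (words_valid n m _ H0) as [_ Hl].
     pose proof (len_le p (nth i W []) Hp). rewrite Hl in H1. specialize (HN2 m ltac:(unfold m; lia)).
     pose proof (len_pos p (nth i W []) Hp). lra.
   + rewrite nth_overflow by (rewrite length_map; auto). lra.
 - intros M. eapply Rle_trans.
   { apply Req_le. apply sum_eq. intros i _. apply pw_nth. }
   eapply Rle_trans. apply sum_nth_le.
   { intros i. rewrite <- pw_nth. apply pw_nonneg. }
   rewrite fold_map_wsum. unfold W. rewrite wsum_words; auto. left. apply HN1. unfold m; lia.
Qed.

Fixpoint Mm p n d K a b : R :=
  match K with
  | O => if Rlt_dec a 0 then if Rlt_dec 1 b then 1 else 0 else 0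
  | S K => lsum (seq 1 n) (fun j => Rpower (geom p j) d *
            Mm p n d K ((a - phat (geom p) j) / geom p j) ((b - phat (geom p) j) / geom p j))
  end.

Lemma Rpower_pos x s : 0 < Rpower x s.
Proof. unfold Rpower. apply exp_pos. Qed.

Lemma div_lt_iff a c q y : 0 < q -> ((a - c) / q < y <-> a < q * y + c).
Proof. intros Hq. assert (E : (a - c) / q * q = a - c) by (field; lra). split; intros H; nra. Qed.

Lemma div_gt_iff b c q y : 0 < q -> (y < (b - c) / q <-> q * y + c < b).
Proof. intros Hq. assert (E : (b - c) / q * q = b - c) by (field; lra). split; intros H; nra. Qed.

Lemma Mm_nonneg p n d K a b : 0 <= Mm p n d K a b.
Proof. revert a b; induction K; intros a b; simpl.
 - destruct (Rlt_dec a 0); destruct (Rlt_dec 1 b); lra.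
 - apply lsum_nonneg. intros j _. apply Rmult_le_pos. left; apply Rpower_pos. apply IHK. Qed.

Lemma Mm_le1 p n d K a b : 0 < p < 1 -> Fs p n d = 1 -> Mm p n d K a b <= 1.
Proof. intros Hp HF. revert a b; induction K; intros a b; simpl.
 - destruct (Rlt_dec a 0); destruct (Rlt_dec 1 b); lra.
 - rewrite <- HF. unfold Fs. apply lsum_le. intros j _.
   pose proof (Rpower_pos (geom p j) d). specialize (IHK ((a - phat (geom p) j) / geom p j) ((b - phat (geom p) j) / geom p j)).
   pose proof (Mm_nonneg p n d K ((a - phat (geom p) j) / geom p j) ((b - phat (geom p) j) / geom p j)). nra. Qed.

Lemma Mm_pos_pt p n d K a b : 0 < p < 1 -> 0 < Mm p n d K a b ->
  exists y, a < y < b /\ 0 <= y <= 1 - p ^ n.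
Proof. intros Hp. revert a b; induction K; intros a b; simpl.
 - destruct (Rlt_dec a 0); destruct (Rlt_dec 1 b); try lra. intros _. exists 0.
   assert (p ^ n <= 1) by (apply pow_le_one; lra). lra.
 - intros H. assert (exists j, In j (seq 1 n) /\ 0 < Rpower (geom p j) d *
            Mm p n d K ((a - phat (geom p) j) / geom p j) ((b - phat (geom p) j) / geom p j)) as [j [Hj Hpos]].
   { destruct (Classical_Prop.classic (exists j, In j (seq 1 n) /\ 0 < Rpower (geom p j) d *
            Mm p n d K ((a - phat (geom p) j) / geom p j) ((b - phat (geom p) j) / geom p j))); auto.
     exfalso. rewrite lsum_zero in H. lra. intros j Hj.
     pose proof (Rpower_pos (geom p j) d). pose proof (Mm_nonneg p n d K ((a - phat (geom p) j) / geom p j) ((b - phat (geom p) j) / geom p j)).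
     destruct (Rle_lt_or_eq_dec 0 _ (Rmult_le_pos _ _ (Rlt_le _ _ H1) H2)) as [h|h]; [exfalso; apply H0; exists j; auto | auto]. }
   pose proof (Rpower_pos (geom p j) d).
   assert (0 < Mm p n d K ((a - phat (geom p) j) / geom p j) ((b - phat (geom p) j) / geom p j)).
   { pose proof (Mm_nonneg p n d K ((a - phat (geom p) j) / geom p j) ((b - phat (geom p) j) / geom p j)).
     destruct (Rle_lt_or_eq_dec 0 _ H1); auto. rewrite <- e in Hpos. lra. }
   destruct (IHK _ _ H1) as [y [Hy1 Hy2]]. pose proof (geom_pos p j Hp).
   exists (Tmap (geom p) j y). unfold Tmap. split.
   split; [apply div_lt_iff|apply div_gt_iff]; auto; lra.
   apply in_seq in Hj. assert (0 <= p ^ n) by (apply pow_le; lra).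
   destruct (Tmap_range p n j y Hp ltac:(lia) ltac:(lra)) as [R1 [R2 R3]]. unfold Tmap in R1. lra.
Qed.

Definition gg p n := (1 - p) * p ^ (n - 1) * p ^ n.

Lemma gg_pos p n : 0 < p < 1 -> 0 < gg p n.
Proof. intros. unfold gg. repeat apply Rmult_lt_0_compat; try lra; apply pow_lt; lra. Qed.

Lemma gg_lt1 p n : 0 < p < 1 -> gg p n < 1.
Proof. intros. unfold gg. assert (p ^ (n-1) <= 1) by (apply pow_le_one; lra).
 assert (p ^ n <= 1) by (apply pow_le_one; lra). assert (0 <= p^(n-1)) by (apply pow_le; lra).
 assert (0 <= p^n) by (apply pow_le; lra).
 assert (p ^ (n-1) * p ^ n <= 1) by nra. nra. Qed.

Lemma sep p n j j' y z : 0 < p < 1 -> (1 <= j < j')%nat -> (j' <= n)%nat ->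
  0 <= y <= 1 - p ^ n -> 0 <= z <= 1 -> gg p n <= Tmap (geom p) j' z - Tmap (geom p) j y.
Proof. intros Hp Hj Hj' Hy Hz. destruct j as [|k]; [lia|]. destruct j' as [|k']; [lia|].
 rewrite !Tmap_S. unfold gg.
 assert (0 < p ^ k) by (apply pow_lt; lra).
 assert (p ^ k' <= p ^ S k) by (apply pow_le_dec; [lra|lia]).
 assert (p ^ (n-1) <= p ^ k) by (apply pow_le_dec; [lra|lia]).
 assert (0 < p ^ n) by (apply pow_lt; lra).
 assert (0 <= (1 - p) * p ^ k' * z) by (apply Rmult_le_pos; [apply Rmult_le_pos|]; try lra; apply pow_le; lra).
 assert ((1 - p) * p ^ k * y <= (1 - p) * p ^ k * (1 - p ^ n)) by (apply Rmult_le_compat_l; [apply Rmult_le_pos|]; lra).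
 assert ((1-p) * p ^ (n-1) * p ^ n <= (1-p) * p ^ k * p ^ n).
 { apply Rmult_le_compat_r; [lra|]. apply Rmult_le_compat_l; lra. }
 simpl pow in *. lra.
Qed.

Lemma Rpower_div x q d : 0 < x -> 0 < q -> Rpower (x / q) d = Rpower x d / Rpower q d.
Proof. intros. unfold Rdiv. rewrite <- Rpower_mult_distr; auto. f_equal.
 unfold Rpower. rewrite ln_Rinv by auto. rewrite <- exp_Ropp. f_equal. ring.
 apply Rinv_0_lt_compat; auto. Qed.

Lemma Mm_bound p n d K a b : 0 < p < 1 -> Fs p n d = 1 -> 0 <= d -> a < b ->
  Mm p n d K a b <= / Rpower (gg p n) d * Rpower (b - a) d.
Proof. intros Hp HF Hd. revert a b. pose proof (gg_pos p n Hp) as Hg. pose proof (gg_lt1 p n Hp).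
 pose proof (Rpower_pos (gg p n) d) as Hgd.
 induction K; intros a b Hab.
 - destruct (Rle_or_lt (gg p n) (b - a)) as [Hc|Hc].
   + apply Rle_trans with 1. apply Mm_le1; auto.
     assert (Rpower (gg p n) d <= Rpower (b-a) d) by (apply Rle_Rpower_l; lra).
     apply (Rmult_le_reg_l (Rpower (gg p n) d)); auto. rewrite <- Rmult_assoc, Rinv_r by lra. lra.
   + simpl. destruct (Rlt_dec a 0); destruct (Rlt_dec 1 b); try lra.
     all: apply Rmult_le_pos; [left; apply Rinv_0_lt_compat; auto | left; apply Rpower_pos].
 - destruct (Rle_or_lt (gg p n) (b - a)) as [Hc|Hc].
   + apply Rle_trans with 1. apply Mm_le1; auto.
     assert (Rpower (gg p n) d <= Rpower (b-a) d) by (apply Rle_Rpower_l; lra).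
     apply (Rmult_le_reg_l (Rpower (gg p n) d)); auto. rewrite <- Rmult_assoc, Rinv_r by lra. lra.
   + simpl. apply lsum_single.
     * apply seq_NoDup.
     * intros j _. apply Rmult_le_pos. left; apply Rpower_pos. apply Mm_nonneg.
     * intros j j' Hj Hj' Pj Pj'.
       assert (Q : forall j, In j (seq 1 n) -> 0 < Rpower (geom p j) d *
            Mm p n d K ((a - phat (geom p) j) / geom p j) ((b - phat (geom p) j) / geom p j) ->
            exists Y, a < Tmap (geom p) j Y < b /\ 0 <= Y <= 1 - p ^ n).
       { clear j j' Hj Hj' Pj Pj'. intros j Hj Pj. pose proof (Rpower_pos (geom p j) d).
         assert (0 < Mm p n d K ((a - phat (geom p) j) / geom p j) ((b - phat (geom p) j) / geom p j)).
         { pose proof (Mm_nonneg p n d K ((a - phat (geom p) j) / geom p j) ((b - phat (geom p) j) / geom p j)).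
           destruct (Rle_lt_or_eq_dec 0 _ H1); auto. rewrite <- e in Pj. lra. }
         destruct (Mm_pos_pt p n d K _ _ Hp H1) as [y [Hy1 Hy2]]. exists y. split; auto.
         pose proof (geom_pos p j Hp). unfold Tmap.
         split; [apply div_lt_iff|apply div_gt_iff]; auto; lra. }
       destruct (Q j Hj Pj) as [Y [HY1 HY2]]. destruct (Q j' Hj' Pj') as [Z [HZ1 HZ2]].
       apply in_seq in Hj, Hj'. assert (0 <= p ^ n) by (apply pow_le; lra).
       destruct (Nat.lt_total j j') as [L|[L|L]]; auto; exfalso.
       -- pose proof (sep p n j j' Y Z Hp ltac:(lia) ltac:(lia) HY2 ltac:(lra)). lra.
       -- pose proof (sep p n j' j Z Y Hp ltac:(lia) ltac:(lia) HZ2 ltac:(lra)). lra.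
     * intros j _. pose proof (geom_pos p j Hp).
       assert (Hlt : (a - phat (geom p) j) / geom p j < (b - phat (geom p) j) / geom p j).
       { unfold Rdiv. apply Rmult_lt_compat_r. apply Rinv_0_lt_compat; auto. lra. }
       specialize (IHK _ _ Hlt).
       replace ((b - phat (geom p) j) / geom p j - (a - phat (geom p) j) / geom p j) with ((b - a) / geom p j) in IHK by (field; lra).
       rewrite Rpower_div in IHK by lra. pose proof (Rpower_pos (geom p j) d).
       apply Rmult_le_compat_l with (r := Rpower (geom p j) d) in IHK; [|lra].
       eapply Rle_trans; [apply IHK|]. right. field. lra.
     * apply Rmult_le_pos; [left; apply Rinv_0_lt_compat; auto | left; apply Rpower_pos].
Qed.

Definition inside p u a b := a < Tl p u 0 /\ Tl p u 0 + len p u < b.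

Lemma sum_ge_term f N i : (forall k, 0 <= f k) -> (i <= N)%nat -> f i <= sum_f_R0 f N.
Proof. intros Hf Hi. induction N.
 - replace i with O by lia. simpl. lra.
 - simpl. destruct (Nat.eq_dec i (S N)) as [->|ne]. 
   + assert (0 <= sum_f_R0 f N) by (apply cond_pos_sum; auto). lra.
   + pose proof (Hf (S N)). assert (f i <= sum_f_R0 f N) by (apply IHN; lia). lra.
Qed.

Lemma cover_sum p n d K : 0 < p < 1 -> Fs p n d = 1 ->
  forall (a b : nat -> R) N,
  (forall u, valid n u -> length u = K -> exists i, (i <= N)%nat /\ inside p u (a i) (b i)) ->
  1 <= sum_f_R0 (fun i => Mm p n d K (a i) (b i)) N.
Proof. intros Hp HF. induction K; intros a b N Hc.
 - destruct (Hc [] (Forall_nil _) eq_refl) as [i [Hi [H1 H2]]]. simpl in H1, H2.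
   eapply Rle_trans; [|apply (sum_ge_term _ N i); auto]. simpl.
   destruct (Rlt_dec (a i) 0); destruct (Rlt_dec 1 (b i)); lra.
   intros; apply Mm_nonneg.
 - simpl. rewrite sum_f_R0_lsum. rewrite <- HF. unfold Fs. apply lsum_le. intros j Hj.
   rewrite (sum_eq _ (fun i => Mm p n d K ((a i - phat (geom p) j) / geom p j) ((b i - phat (geom p) j) / geom p j) * Rpower (geom p j) d)) by (intros; ring).
   rewrite <- scal_sum. rewrite <- (Rmult_1_r (Rpower (geom p j) d)) at 1.
   apply Rmult_le_compat_l. left; apply Rpower_pos.
   apply IHK. intros u Hu Hl. apply in_seq in Hj.
   destruct (Hc (j :: u) ltac:(constructor; auto; lia) ltac:(simpl; lia)) as [i [Hi [H1 H2]]].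
   exists i. split; auto. simpl in H1, H2. fold (Tl p u 0) in H1, H2. unfold Tmap in H1, H2.
   pose proof (geom_pos p j Hp). unfold inside. split.
   apply div_lt_iff; auto. apply div_gt_iff; auto. lra.
Qed.

Lemma inside_ext p n u t A B : 0 < p < 1 -> valid n t -> inside p u A B -> inside p (u ++ t) A B.
Proof. intros Hp Ht [H1 H2]. unfold inside. rewrite Tl_app, len_app.
 rewrite (Tl_affine p u (Tl p t 0)).
 pose proof (Tl_range p n t 0 Hp Ht ltac:(lra)). pose proof (Tl_range p n t 1 Hp Ht ltac:(lra)).
 rewrite (Tl_affine p t 1) in H0. pose proof (len_pos p u Hp). pose proof (len_pos p t Hp).
 split. nra. nra. Qed.

Definition good p (a b : nat -> R) k u := exists i, (i <= k)%nat /\ inside p u (a i) (b i).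
Definition Bad p n a b u := valid n u /\ ~ good p a b (length u) u.

Lemma Bad_prefix p n a b u t : 0 < p < 1 -> Bad p n a b (u ++ t) -> Bad p n a b u.
Proof. intros Hp [Hv Hg]. apply Forall_app in Hv. destruct Hv as [Hu Ht]. split; auto.
 intros [i [Hi Hin]]. apply Hg. exists i. split. rewrite length_app; lia.
 apply (inside_ext p n); auto. Qed.

Definition Pk p n a b u := forall k, exists t, length t = k /\ Bad p n a b (u ++ t).

Lemma noext_mono p n a b v k k' : 0 < p < 1 -> (k <= k')%nat ->
  (forall t, length t = k -> ~ Bad p n a b (v ++ t)) ->
  (forall t, length t = k' -> ~ Bad p n a b (v ++ t)).
Proof. intros Hp Hk H t Ht HB. apply (H (firstn k t)). rewrite length_firstn; lia.
 rewrite <- (firstn_skipn k t) in HB. rewrite app_assoc in HB. apply Bad_prefix in HB; auto. Qed.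

Lemma noext_bound p n a b u l : 0 < p < 1 ->
  (forall j, In j l -> exists k, forall t, length t = k -> ~ Bad p n a b ((u ++ [j]) ++ t)) ->
  exists K, forall j, In j l -> forall t, length t = K -> ~ Bad p n a b ((u ++ [j]) ++ t).
Proof. intros Hp. induction l; intros H. exists O. intros j [].
 destruct (H a0 (or_introl eq_refl)) as [k1 Hk1].
 destruct IHl as [K HK]. intros j Hj; apply H; right; auto.
 exists (max k1 K). intros j [<-|Hj] t Ht.
 - apply (noext_mono p n a b _ k1 (max k1 K)); auto; lia.
 - apply (noext_mono p n a b _ K (max k1 K)); auto; lia.
Qed.

Lemma Pk_step p n a b u : 0 < p < 1 -> Pk p n a b u -> exists j, (1 <= j <= n)%nat /\ Pk p n a b (u ++ [j]).
Proof. intros Hp HP. apply NNPP. intros Hn.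
 assert (H : forall j, In j (seq 1 n) -> exists k, forall t, length t = k -> ~ Bad p n a b ((u ++ [j]) ++ t)).
 { intros j Hj. apply in_seq in Hj. apply NNPP. intros Hk. apply Hn. exists j. split. lia.
   intros k. apply NNPP. intros Hk2. apply Hk. exists k. intros t Ht HB. apply Hk2. exists t; auto. }
 destruct (noext_bound p n a b u _ Hp H) as [K HK].
 destruct (HP (S K)) as [t [Ht HB]]. destruct t as [|j t']. simpl in Ht; lia.
 assert (Hj : (1 <= j <= n)%nat).
 { destruct HB as [Hv _]. apply Forall_app in Hv. destruct Hv as [_ Hv]. inversion Hv; auto. }
 apply (HK j ltac:(apply in_seq; lia) t' ltac:(simpl in Ht; lia)).
 rewrite <- app_assoc. simpl. auto.
Qed.

Lemma compact_cover p n (a b : nat -> R) : 0 < p < 1 ->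
  (forall x, Pi_set (geom p) n x -> exists i, a i < x < b i) ->
  exists N K, forall u, valid n u -> length u = K -> exists i, (i <= N)%nat /\ inside p u (a i) (b i).
Proof. intros Hp Hcov. apply NNPP. intros Hno.
 assert (P0 : Pk p n a b []).
 { intros k. apply NNPP. intros Hk. apply Hno. exists k, k. intros u Hu Hl.
   apply NNPP. intros Hg. apply Hk. exists u. split; auto. split; auto. simpl. rewrite Hl. auto. }
 set (ch := fun u => epsilon (inhabits 0%nat) (fun j => (1 <= j <= n)%nat /\ Pk p n a b (u ++ [j]))).
 assert (Hch : forall u, Pk p n a b u -> (1 <= ch u <= n)%nat /\ Pk p n a b (u ++ [ch u])).
 { intros u Hu. unfold ch. apply epsilon_spec. apply Pk_step; auto. }
 set (pr := fix pr k := match k with O => [] | S k => pr k ++ [ch (pr k)] end).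
 assert (Hpr : forall k, Pk p n a b (pr k)).
 { induction k. exact P0. simpl. apply Hch; auto. }
 set (w := fun k => ch (pr k)).
 assert (Hw : forall k, (1 <= w k <= n)%nat). { intros k. apply Hch, Hpr. }
 assert (Hpw : forall k, pref w k = pr k). { induction k; simpl; auto. rewrite IHk. auto. }
 destruct (lim_exists p n w Hp Hw) as [x Hx].
 destruct (Hcov x) as [i [Hi1 Hi2]]. exists w; auto.
 destruct (small_pow (1-p) (Rmin (x - a i) (b i - x)) ltac:(lra)) as [N HN].
 { apply Rmin_glb_lt; lra. }
 set (k := max N i). specialize (HN k ltac:(unfold k; lia)).
 pose proof (lim_incyl p n w x k Hp Hw Hx) as Hin.
 pose proof (len_le p (pref w k) Hp). rewrite pref_length in H.
 pose proof (Rmin_l (x - a i) (b i - x)). pose proof (Rmin_r (x - a i) (b i - x)).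
 destruct (Hpr k 0%nat) as [t [Ht HB]]. destruct t; [|simpl in Ht; lia].
 rewrite app_nil_r in HB. destruct HB as [_ Hg]. apply Hg. exists i. split.
 rewrite <- Hpw, pref_length. unfold k; lia.
 rewrite <- Hpw. unfold incyl in Hin. unfold inside. lra.
Qed.

Lemma ln_nonpos x : 0 < x <= 1 -> ln x <= 0.
Proof. intros [H1 H2]. destruct H2 as [H2|H2]. rewrite <- ln_1. left; apply ln_increasing; auto.
 subst; rewrite ln_1; lra. Qed.

Lemma Rpower_le_exp x s d : 0 < x <= 1 -> s <= d -> Rpower x d <= Rpower x s.
Proof. intros Hx Hsd. unfold Rpower. pose proof (ln_nonpos x Hx).
 destruct (Req_dec (s * ln x) (d * ln x)) as [E|E]. rewrite E; lra.
 left; apply exp_increasing. nra. Qed.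

Lemma geo_sum tau N : sum_f_R0 (fun i => tau / 2 ^ (S i)) N = tau * (1 - / 2 ^ (S N)).
Proof. induction N. simpl. field. rewrite tech5, IHN. simpl pow. field.
 apply pow_nonzero; lra. Qed.

Lemma lower_bound p n d s : 0 < p < 1 -> Fs p n d = 1 -> 0 < s < d -> d <= 1 ->
  ~ Hnull (Pi_set (geom p) n) s.
Proof. intros Hp HF Hs Hd1 HN.
 set (C := / Rpower (gg p n) d).
 assert (HC : 0 < C) by (apply Rinv_0_lt_compat, Rpower_pos).
 set (tau := Rmin (Rpower (1/4) s) (/ (16 * C))).
 assert (Htau : 0 < tau). { apply Rmin_glb_lt. apply Rpower_pos. apply Rinv_0_lt_compat; lra. }
 destruct (HN (1/4) (/ (16 * C)) ltac:(lra) ltac:(apply Rinv_0_lt_compat; lra)) as [U [r [[Hcov Hdiam] [Hr Hsum]]]].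
 set (eta := fun i => Rpower (tau / 2 ^ (S i)) (/ s)).
 assert (Heta_s : forall i, Rpower (eta i) s = tau / 2 ^ (S i)).
 { intros i. unfold eta. rewrite Rpower_mult. rewrite Rinv_l by lra. apply Rpower_1.
   apply Rdiv_lt_0_compat; auto. apply pow_lt; lra. }
 assert (Heta_pos : forall i, 0 < eta i) by (intros; apply Rpower_pos).
 assert (Heta_le : forall i, eta i <= 1/4).
 { intros i. unfold eta. replace (1/4) with (Rpower (Rpower (1/4) s) (/ s)).
   apply Rle_Rpower_l. left; apply Rinv_0_lt_compat; lra. split.
   apply Rdiv_lt_0_compat; auto. apply pow_lt; lra.
   apply Rle_trans with tau. 
   { unfold Rdiv. rewrite <- (Rmult_1_r tau) at 2. apply Rmult_le_compat_l. lra.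
     rewrite <- Rinv_1. apply Rinv_le_contravar. lra. apply pow_R1_Rle; lra. }
   apply Rmin_l.
   rewrite Rpower_mult, Rinv_r by lra. apply Rpower_1; lra. }
 set (z := fun i => epsilon (inhabits 0) (fun z => U i z)).
 set (m := fun i => Rmax (r i) (eta i)).
 assert (Hm_pos : forall i, 0 < m i) by (intros; unfold m; eapply Rlt_le_trans; [apply Heta_pos| apply Rmax_r]).
 assert (Hm_le : forall i, m i <= 1/4) by (intros; unfold m; apply Rmax_lub; [apply Hr| apply Heta_le]).
 set (a := fun i => z i - 2 * m i). set (b := fun i => z i + 2 * m i).
 destruct (compact_cover p n a b Hp) as [N [K HK]].
 { intros x Hx. destruct (Hcov x Hx) as [i Hi]. exists i.
   assert (Hz : U i (z i)) by (unfold z; apply epsilon_spec; exists x; auto).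
   pose proof (Hdiam i x (z i) Hi Hz). pose proof (Rle_abs (x - z i)) as A1. pose proof (Rle_abs (- (x - z i))) as A2. rewrite Rabs_Ropp in A2.
   assert (r i <= m i) by apply Rmax_l. pose proof (Hm_pos i). unfold a, b. lra. }
 pose proof (cover_sum p n d K Hp HF a b N HK) as H1.
 assert (H2 : sum_f_R0 (fun i => Mm p n d K (a i) (b i)) N <=
              sum_f_R0 (fun i => 4 * C * (pw (r i) s + tau / 2 ^ (S i))) N).
 { apply sum_Rle. intros i _. pose proof (Hm_pos i). pose proof (Hm_le i).
   eapply Rle_trans. { apply Mm_bound; auto. lra. unfold a, b. lra. } unfold a, b. fold C.
   replace (z i + 2 * m i - (z i - 2 * m i)) with (4 * m i) by ring.
   rewrite (Rmult_comm 4 C), Rmult_assoc. apply Rmult_le_compat_l. lra.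
   eapply Rle_trans. apply Rpower_le_exp with (s := s); lra.
   rewrite <- Rpower_mult_distr by lra.
   assert (Rpower 4 s <= 4). { rewrite <- (Rpower_1 4) at 2 by lra. apply Rle_Rpower; lra. }
   assert (Rpower (m i) s <= pw (r i) s + tau / 2 ^ (S i)).
   { rewrite <- Heta_s. unfold m, Rmax. pose proof (pw_nonneg (r i) s).
     destruct (Rle_dec (r i) (eta i)). lra.
     rewrite pw_pos by (pose proof (Heta_pos i); lra). pose proof (Rpower_pos (eta i) s). lra. }
   pose proof (Rpower_pos 4 s). pose proof (Rpower_pos (m i) s). nra. }
 rewrite (sum_eq (fun i => 4 * C * (pw (r i) s + tau / 2 ^ (S i))) (fun i => (pw (r i) s + tau / 2 ^ (S i)) * (4 * C))) in H2 by (intros; ring).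
 rewrite <- scal_sum, plus_sum, geo_sum in H2.
 pose proof (Hsum N). assert (tau <= / (16 * C)) by apply Rmin_r.
 assert (/ 2 ^ (S N) > 0) by (apply Rinv_0_lt_compat, pow_lt; lra).
 assert (H5 : 4 * C * (sum_f_R0 (fun i => pw (r i) s) N + tau * (1 - / 2 ^ S N)) <= 4 * C * (2 * / (16 * C))).
 { apply Rmult_le_compat_l. lra. nra. }
 replace (4 * C * (2 * / (16 * C))) with (/2) in H5 by (field; lra). lra.
Qed.

Lemma lsum_lt l f g : l <> [] -> (forall j, In j l -> f j < g j) -> lsum l f < lsum l g.
Proof. induction l as [|a l IH]; intros Hl H. congruence. simpl.
 pose proof (H a (or_introl eq_refl)). destruct l.
 simpl. lra. assert (lsum (n :: l) f < lsum (n :: l) g) by (apply IH; [congruence| intros; apply H; right; auto]). lra. Qed.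

Lemma ln_neg x : 0 < x < 1 -> ln x < 0.
Proof. intros. rewrite <- ln_1. apply ln_increasing; lra. Qed.

Lemma geom_lt1 p j : 0 < p < 1 -> geom p j < 1.
Proof. intros. pose proof (geom_le p j H). lra. Qed.

Lemma Fs_dec p n s s' : 0 < p < 1 -> (1 <= n)%nat -> s < s' -> Fs p n s' < Fs p n s.
Proof. intros Hp Hn Hs. unfold Fs. apply lsum_lt. destruct n; [lia|]. simpl; congruence.
 intros j _. unfold Rpower. apply exp_increasing. pose proof (ln_neg (geom p j) (conj (geom_pos p j Hp) (geom_lt1 p j Hp))). nra. Qed.

Lemma lsum_cont l (f : nat -> R -> R) x : (forall j, continuity_pt (f j) x) ->
  continuity_pt (fun s => lsum l (fun j => f j s)) x.
Proof. intros H. induction l; simpl.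
 - apply continuity_pt_const. intros a b; auto.
 - apply (continuity_pt_plus (f a) (fun s => lsum l (fun j => f j s))); auto. Qed.

Lemma Fs_cont p n s : continuity_pt (fun s => Fs p n s) s.
Proof. unfold Fs. apply (lsum_cont _ (fun j s => Rpower (geom p j) s)). intros j. unfold Rpower. reg. Qed.

Lemma Fs_0 p n : 0 < p < 1 -> Fs p n 0 = INR n.
Proof. intros Hp. unfold Fs. induction n. reflexivity. rewrite lsum_seqS, IHn, S_INR.
 rewrite Rpower_O. auto. apply geom_pos; auto. Qed.

Lemma Fs_1 p n : 0 < p < 1 -> Fs p n 1 = 1 - p ^ n.
Proof. intros Hp. unfold Fs. induction n. simpl. ring. rewrite lsum_seqS, IHn.
 rewrite Rpower_1 by (apply geom_pos; auto). rewrite geom_S. simpl. ring. Qed.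

Lemma Fs_root p n : 0 < p < 1 -> (2 <= n)%nat -> exists d, 0 < d <= 1 /\ Fs p n d = 1.
Proof. intros Hp Hn.
 destruct (IVT_interv (fun s => 1 - Fs p n s) 0 1) as [d [Hd E]].
 - intros a _. apply continuity_pt_minus. apply continuity_pt_const; intros ? ?; auto. apply Fs_cont.
 - lra.
 - rewrite Fs_0; auto. assert (2 <= INR n) by (change 2 with (INR 2); apply le_INR; auto). lra.
 - rewrite Fs_1; auto. pose proof (pow_lt p n ltac:(lra)). lra.
 - exists d. assert (d <> 0). { intros ->. rewrite Fs_0 in E; auto.
     assert (2 <= INR n) by (change 2 with (INR 2); apply le_INR; auto). lra. }
   split; lra.
Qed.

Lemma Rpower_pow_l x k d : 0 < x -> Rpower (x ^ k) d = (Rpower x d) ^ k.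
Proof. intros Hx. rewrite <- (Rpower_pow k (Rpower x d)) by apply Rpower_pos. rewrite Rpower_mult.
 unfold Rpower. rewrite ln_pow by auto. f_equal. ring. Qed.

Lemma Fs_formula p n d : 0 < p < 1 -> 0 < d ->
  Fs p n d = (1 - Rpower p (d * INR n)) * Rpower (1 - p) d / (1 - Rpower p d).
Proof. intros Hp Hd. assert (Hr : Rpower p d < 1).
 { unfold Rpower. rewrite <- exp_0. apply exp_increasing. pose proof (ln_neg p Hp). nra. }
 rewrite <- Rpower_mult, Rpower_pow by apply Rpower_pos.
 unfold Fs. induction n.
 - simpl. field. lra.
 - rewrite lsum_seqS, IHn. rewrite geom_S, <- Rpower_mult_distr, Rpower_pow_l by (try apply pow_lt; lra).
   simpl. field. lra.
Qed.

Lemma dim_eq_iff p n d : 0 < p < 1 -> 0 < d -> (dim_eq p n d <-> Fs p n d = 1).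
Proof. intros. unfold dim_eq. rewrite Fs_formula; auto. tauto. Qed.

Lemma part1 p n : 0 < p < 1 -> (2 <= n)%nat ->
  exists d0, 0 < d0 <= 1 /\ Fs p n d0 = 1 /\ hausdorff_dim (Pi_set (geom p) n) d0 /\
   (forall d', 0 < d' -> Fs p n d' = 1 -> d' = d0).
Proof. intros Hp Hn. destruct (Fs_root p n Hp Hn) as [d0 [Hd0 HF]]. exists d0.
 assert (Huniq : forall d', 0 < d' -> Fs p n d' = 1 -> d' = d0).
 { intros d' Hd' HF'. destruct (Rtotal_order d' d0) as [L|[L|L]]; auto.
   - pose proof (Fs_dec p n d' d0 Hp ltac:(lia) L). lra.
   - pose proof (Fs_dec p n d0 d' Hp ltac:(lia) L). lra. }
 repeat split; try lra; auto. 
 - intros s Hs HN. destruct (Rle_or_lt d0 s); auto. exfalso.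
   apply (lower_bound p n d0 s Hp HF); auto; lra.
 - intros d' Hd'. destruct (Rle_or_lt d' d0); auto. exfalso.
   set (s := (d0 + d') / 2). assert (d0 < s < d') by (unfold s; lra).
   assert (Hnull (Pi_set (geom p) n) s).
   { apply upper_bound; auto. lra. pose proof (Fs_dec p n d0 s Hp ltac:(lia) ltac:(lra)). lra. }
   pose proof (Hd' s ltac:(lra) H1). lra.
Qed.

Lemma Fs_cont_p n t p : 0 < p < 1 -> continuity_pt (fun p => Fs p n t) p.
Proof. intros Hp. unfold Fs. apply (lsum_cont _ (fun j p => Rpower (geom p j) t)). intros j.
 apply (continuity_pt_comp (fun p => geom p j) (fun x => Rpower x t)).
 - unfold geom. reg.
 - apply derivable_continuous_pt. exists (t * Rpower (geom p j) (t - 1)).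
   apply derivable_pt_lim_power. apply geom_pos; auto. Qed.

Lemma Fs_ge2 p n t : 0 < p < 1 -> (2 <= n)%nat ->
  Rpower (geom p 1) t + Rpower (geom p 2) t <= Fs p n t.
Proof. intros Hp Hn. unfold Fs. destruct n as [|[|n]]; try lia.
 simpl. pose proof (lsum_nonneg (seq 3 n) (fun j => Rpower (geom p j) t) (fun j _ => Rlt_le _ _ (Rpower_pos _ _))). lra. Qed.

Lemma Fs_le_n p n t : 0 < p < 1 -> 0 <= t -> Fs p n t <= INR n * Rpower (1 - p) t.
Proof. intros Hp Ht. unfold Fs. induction n. simpl. lra. rewrite lsum_seqS, S_INR.
 assert (Rpower (geom p (S n)) t <= Rpower (1 - p) t).
 { apply Rle_Rpower_l; auto. split. apply geom_pos; auto. apply geom_le; auto. }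
 lra. Qed.

Lemma surj n t : (2 <= n)%nat -> 0 < t < 1 -> exists p, 0 < p < 1 /\ Fs p n t = 1.
Proof. intros Hn Ht.
 assert (He1 : exp (Ropp 1) < /2).
 { rewrite exp_Ropp. pose proof (exp_ineq1 1 ltac:(lra)). apply Rinv_lt_contravar; lra. }
 set (p1 := exp (- / (1 - t))).
 set (p2 := 1 - exp (- (INR n / t))).
 assert (Hinv : 1 <= / (1 - t)). { rewrite <- Rinv_1. apply Rinv_le_contravar; lra. }
 assert (Hp1 : 0 < p1 < /2).
 { split. apply exp_pos. apply Rle_lt_trans with (exp (Ropp 1)); auto. unfold p1.
   destruct (Req_dec (/ (1-t)) 1) as [E|E]. rewrite E; lra. left; apply exp_increasing; lra. }
 assert (Hn2 : 2 <= INR n) by (change 2 with (INR 2); apply le_INR; auto).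
 assert (Hnt : 1 < INR n / t). { apply (Rmult_lt_reg_r t). lra. unfold Rdiv. rewrite Rmult_assoc, Rinv_l; lra. }
 assert (Hp2 : /2 < p2 < 1).
 { unfold p2. split. assert (exp (- (INR n / t)) < exp (Ropp 1)) by (apply exp_increasing; lra). lra.
   pose proof (exp_pos (- (INR n / t))). lra. }
 destruct (IVT_interv (fun p => 1 - Fs p n t) p1 p2) as [p [Hp E]].
 - intros a Ha. apply continuity_pt_minus. apply continuity_pt_const; intros ? ?; auto.
   apply Fs_cont_p. lra.
 - lra.
 -
   pose proof (Fs_ge2 p1 n t ltac:(lra) Hn).
   assert (Rpower (geom p1 1) t >= 1 - p1).
   { unfold geom. simpl. rewrite Rmult_1_r. apply Rle_ge.
     rewrite <- (Rpower_1 (1 - p1)) at 1 by lra. apply Rpower_le_exp; lra. }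
   assert (Rpower (geom p1 2) t = Rpower (geom p1 1) t * Rpower p1 t).
   { unfold geom. simpl. rewrite !Rmult_1_r, Rpower_mult_distr; auto; lra. }
   assert (Hkey : p1 < (1 - p1) * Rpower p1 t).
   { assert (E1 : Rpower p1 t = exp (t * - / (1 - t))) by (unfold Rpower, p1; rewrite ln_exp; ring).
     assert (E2 : p1 = exp (t * - / (1 - t)) * exp (Ropp 1)).
     { unfold p1. rewrite <- exp_plus. f_equal. field. lra. }
     rewrite E1. rewrite E2 at 1. rewrite (Rmult_comm (1 - p1)). apply Rmult_lt_compat_l. apply exp_pos. lra. }
   pose proof (Rpower_pos p1 t). pose proof (Rpower_pos (geom p1 1) t). nra.
 - pose proof (Fs_le_n p2 n t ltac:(lra) ltac:(lra)).
   assert (Rpower (1 - p2) t = exp (- INR n)).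
   { unfold p2, Rpower. replace (1 - (1 - exp (- (INR n / t)))) with (exp (- (INR n / t))) by ring.
     rewrite ln_exp. f_equal. field. lra. }
   rewrite H0 in H. assert (INR n * exp (- INR n) < 1).
   { rewrite exp_Ropp. apply (Rmult_lt_reg_r (exp (INR n))). apply exp_pos.
     rewrite Rmult_assoc, Rinv_l by (apply Rgt_not_eq, exp_pos). pose proof (exp_ineq1 (INR n) ltac:(lra)). lra. }
   lra.
 - exists p. split. lra. lra.
Qed.

Theorem mainTheorem5 (n : nat) (Hn : (2 <= n)%nat) :
  (forall p : R, 0 < p < 1 ->
     (exists d : R, 0 < d /\ dim_eq p n d /\
        (forall d' : R, 0 < d' -> dim_eq p n d' -> d' = d)) /\
     (forall d : R, hausdorff_dim (Pi_set (geom p) n) d <-> (0 < d /\ dim_eq p n d))) /\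
  (forall t : R, 0 < t < 1 ->
     exists p : R, 0 < p < 1 /\ hausdorff_dim (Pi_set (geom p) n) t).
Proof.
 split.
 - intros p Hp. destruct (part1 p n Hp Hn) as [d0 [Hd0 [HF [Hhd Hu]]]]. split.
   + exists d0. split. lra. split. apply dim_eq_iff; auto; lra.
     intros d' Hd' E. apply Hu; auto. apply dim_eq_iff; auto.
   + intros d. split.
     * intros Hd. assert (d = d0).
       { destruct Hd as [Hd1 Hd2]. destruct Hhd as [Hh1 Hh2].
         apply Rle_antisym. apply Hh2; auto. apply Hd2; auto. }
       subst. split. lra. apply dim_eq_iff; auto; lra.
     * intros [Hd E]. apply dim_eq_iff in E; auto. rewrite (Hu d Hd E). auto.
 - intros t Ht. destruct (surj n t Hn Ht) as [p [Hp HF]]. exists p. split; auto.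
   destruct (part1 p n Hp Hn) as [d0 [Hd0 [HF0 [Hhd Hu]]]].
   rewrite (Hu t ltac:(lra) HF). auto.
Qed.
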